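(* Let $G=(V,E)$ be a graph with $E=\{e_1,\dots,e_m\}$, let $t\le\lfloor m/2\rfloor$, and let $D=(E,A)$ be the digraph with $A=\{(e_i,e_{i+t}) : i\in\{1,\dots,t\}\}$. Let $\ell,u$ be such that $\ell(e)=u(e)=|\mathrm{dep}(e)|\in\{0,1\}$ for every $e\in E$. Let $S=\{e_i: i\in\{t+1,\dots,2t\}\}$, let $C_1,\dots,C_k$ be the connected components of $G-S$, and let $H$ be the multigraph with vertex set $\{C_1,\dots,C_k\}$ having, for each edge $e\in S$ whose endpoints lie in distinct components $C_i\neq C_j$, one edge between $C_i$ and $C_j$ (edges of $S$ with both endpoints in the same component are discarded). For $S'\subseteq S$, let $H(S')$ be the spanning sub-multigraph of $H$ (vertex set $\{C_1,\dots,C_k\}$) consisting of the edges corresponding to elements of $S'$. If there exists $S'\subseteq S$ such that $H(S')$ is a spanning tree of $H$ and the graph $(V,\mathrm{dep}(S'))$ is acyclic, then $G$ has a spanning tree that $(\ell,u)$-satisfies $D$. Conversely, the edge set of any spanning tree of $G$ that $(\ell,u)$-satisfies $D$ contains such a subset $S'$.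
   Context: For $e\in E$, $\mathrm{dep}(e)=\{e'\in E:(e',e)\in A\}$, and for $E'\subseteq E$, $\mathrm{dep}(E')=\bigcup_{e\in E'}\mathrm{dep}(e)$. A subgraph $T$ of $G$ $(\ell,u)$-satisfies $D$ if $\ell(e)\le|\mathrm{dep}(e)\cap E(T)|\le u(e)$ for every $e\in E(T)$. *)

(* Defs.v *)
From mathcomp Require Import all_boot.
Set Implicit Arguments. Unset Strict Implicit. Unset Printing Implicit Defensive.

(* A (multi)graph is given by a vertex finType W, a finite edge index type I,
   and an endpoint map ends : I -> W * W.  Edge sets are {set I}. *)
Section Graphs.
Variables (W : finType) (I : finType) (ends : I -> W * W).

Definition adj (F : {set I}) : rel W :=
  fun x y => [exists e in F, (ends e == (x, y)) || (ends e == (y, x))].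

Definition connected_on (X : {set W}) (F : {set I}) : Prop :=
  forall x y, x \in X -> y \in X -> connect (adj F) x y.

(* the graph with edge set F contains no cycle: no edge of F (including loops
   and parallel edges) lies on a cycle, i.e. its endpoints are not connected
   after removing it *)
Definition acyclic (F : {set I}) : Prop :=
  forall e, e \in F -> ~~ connect (adj (F :\ e)) (ends e).1 (ends e).2.

Definition is_spanning_tree (X : {set W}) (F : {set I}) : Prop :=
  connected_on X F /\ acyclic F.
End Graphs.

Definition dep (I : finType) (A : rel I) (e : I) : {set I} := [set e' | A e' e].
Definition depS (I : finType) (A : rel I) (F : {set I}) : {set I} :=
  \bigcup_(e in F) dep A e.

Definition lu_satisfies (I : finType) (A : rel I) (l u : I -> nat)
  (T : {set I}) : Prop :=
  forall e, e \in T -> l e <= #|dep A e :&: T| <= u e.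

(* A simple graph on V with edges e_0, ..., e_(m-1) (0-based). *)
Definition simple_graph (V : finType) (m : nat) (ends : 'I_m -> V * V) : Prop :=
  (forall e, (ends e).1 != (ends e).2) /\
  (forall e f, (ends e == ends f) || (ends e == ((ends f).2, (ends f).1)) -> e = f).

(* The specific digraph of the lemma: arcs (e_i, e_(i+t)), i = 1..t
   (0-based: (i, i+t) for i < t). *)
Definition shiftA (m t : nat) : rel 'I_m :=
  fun i j => (i < t) && (nat_of_ord j == i + t).

(* S = {e_(t+1), ..., e_(2t)} (0-based: t <= j < 2t) *)
Definition Sset (m t : nat) : {set 'I_m} := [set j : 'I_m | t <= j < t + t].

Definition compo (V : finType) (m : nat) (ends : 'I_m -> V * V)
  (S : {set 'I_m}) (x : V) : {set V} :=
  [set y | connect (adj ends (~: S)) x y].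

(* vertex set of H: the components of G - S *)
Definition comps (V : finType) (m : nat) (ends : 'I_m -> V * V)
  (S : {set 'I_m}) : {set {set V}} :=
  [set compo ends S x | x : V].

(* endpoints in H of an edge of S: the components of its endpoints *)
Definition Hends (V : finType) (m : nat) (ends : 'I_m -> V * V)
  (S : {set 'I_m}) (e : 'I_m) : {set V} * {set V} :=
  (compo ends S (ends e).1, compo ends S (ends e).2).

Definition Hedges (V : finType) (m : nat) (ends : 'I_m -> V * V)
  (S : {set 'I_m}) : {set 'I_m} :=
  [set e in S | (Hends ends S e).1 != (Hends ends S e).2].

Definition H_spanning_tree (V : finType) (m : nat) (ends : 'I_m -> V * V)
  (S S' : {set 'I_m}) : Prop :=
  is_spanning_tree (Hends ends S) (comps ends S) (S' :&: Hedges ends S).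

Arguments shiftA : clear implicits.
Arguments Sset : clear implicits.

(* Main.v *)
Require Import Defs.
From mathcomp Require Import all_boot.
Set Implicit Arguments. Unset Strict Implicit. Unset Printing Implicit Defensive.

Lemma conn_ind (T : finType) (e : rel T) (P : T -> Prop) x :
  P x -> (forall y z, P y -> e y z -> P z) -> forall y, connect e x y -> P y.
Proof.
move=> Px H y /connectP [p pth ->]; elim: p x Px pth => //= z p IH x Px /andP [exz pth].
by apply: IH pth; exact: H Px exz.
Qed.

Section G.
Variables (W I : finType) (ends : I -> W * W).
Implicit Types (F G B : {set I}) (g e f : I).

Lemma adj_sym F : symmetric (adj ends F).
Proof.
move=> x y; apply/existsP/existsP => [][e /andP[eF h]]; exists e; by rewrite eF /= orbC.
Qed.

Lemma csym F x y : connect (adj ends F) x y = connect (adj ends F) y x.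
Proof. exact: (sym_connect_sym (adj_sym F)). Qed.

Lemma adj_edge F g : g \in F -> adj ends F (ends g).1 (ends g).2.
Proof. move=> gF; apply/existsP; exists g; rewrite gF; by case: (ends g) => a b /=; rewrite eqxx. Qed.

Lemma adj_inv F x y : adj ends F x y -> exists2 g, g \in F & ends g = (x,y) \/ ends g = (y,x).
Proof. case/existsP=> g /andP[gF /orP[/eqP|/eqP] h]; exists g => //; by [left|right]. Qed.

Lemma adj_mono F F' : F \subset F' -> subrel (adj ends F) (adj ends F').
Proof.
move=> sub x y /adj_inv [g gF h]; apply/existsP; exists g; rewrite (subsetP sub _ gF).
by case: h => ->; rewrite eqxx ?orbT.
Qed.

Lemma connect_mono F F' : F \subset F' -> forall x y, connect (adj ends F) x y -> connect (adj ends F') x y.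
Proof. move=> sub; apply: connect_sub => x y h; apply: connect1; exact: adj_mono h. Qed.

Lemma acyclic_sub F F' : F \subset F' -> acyclic ends F' -> acyclic ends F.
Proof.
move=> sub ac e eF; apply/negP => c; move: (ac e (subsetP sub _ eF)).
by rewrite (connect_mono (setSD _ sub) c).
Qed.

Lemma split_connect G e x y : connect (adj ends (e |: G)) x y ->
  connect (adj ends G) x y \/
  (connect (adj ends G) x (ends e).1 /\ connect (adj ends G) (ends e).2 y) \/
  (connect (adj ends G) x (ends e).2 /\ connect (adj ends G) (ends e).1 y).
Proof.
set a := (ends e).1; set b := (ends e).2.
move: y; apply: (@conn_ind _ _ (fun y =>   connect (adj ends G) x y \/
  (connect (adj ends G) x a /\ connect (adj ends G) b y) \/
  (connect (adj ends G) x b /\ connect (adj ends G) a y)) x); first by left.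
move=> y z Py /adj_inv [g]; rewrite in_setU1 => /orP[/eqP ->|gG] h.
  have Q : connect (adj ends G) x a \/ connect (adj ends G) x b.
    have [ya|yb] : y = a \/ y = b.
      by case: h; rewrite /a /b => ->; [left|right].
    - by subst y; case: Py => [->|[[->]|[->]]]; auto.
    - by subst y; case: Py => [->|[[->]|[->]]]; auto.
  have [za|zb] : z = a \/ z = b.
    by case: h; rewrite /a /b => ->; [right|left].
  - subst z; case: Q => ?; [by left| by right; right; split].
  - subst z; case: Q => ?; [by right; left; split| by left].
have ayz : adj ends G y z.
  by apply/existsP; exists g; rewrite gG; case: h => ->; rewrite eqxx ?orbT.
have st u : connect (adj ends G) u y -> connect (adj ends G) u z.
  by move=> c; apply: connect_trans c (connect1 ayz).
by case: Py => [c|[[c1 c2]|[c1 c2]]]; [left; exact: st| right;left;split=>//; exact: st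
  | right;right;split=>//; exact: st].
Qed.

Lemma acyclic_add F e : acyclic ends F -> ~~ connect (adj ends F) (ends e).1 (ends e).2 ->
  acyclic ends (e |: F).
Proof.
move=> ac nc f fF.
have [->|nfe] := eqVneq f e.
  apply/negP=> c; move/negP: nc; apply; apply: connect_mono c.
  by apply/subsetP => z; rewrite !inE => /andP[/negPf ->].
have {}fF : f \in F by move: fF; rewrite in_setU1 (negPf nfe).
apply/negP => c.
have sub : (e |: F) :\ f \subset e |: (F :\ f).
  apply/subsetP => z; rewrite !inE => /andP[-> /orP[->|->]] //; by rewrite orbT.
have mF := connect_mono (subsetDl F [set f]).
have ef := connect1 (adj_edge fF).
case: (split_connect (connect_mono sub c)) => [c1|[[c1 c2]|[c1 c2]]].
- by move: (ac f fF); rewrite c1.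
- move/negP: nc; apply.
  apply: (@connect_trans _ _ (ends f).1); first by rewrite csym; apply: mF.
  apply: connect_trans ef _; by rewrite csym; apply: mF.
- move/negP: nc; apply.
  apply: (@connect_trans _ _ (ends f).2); first by apply: mF.
  apply: (@connect_trans _ _ (ends f).1); first by rewrite csym.
  by apply: mF.
Qed.

Definition acyclicb F := [forall e in F, ~~ connect (adj ends (F :\ e)) (ends e).1 (ends e).2].
Lemma acyclicP F : reflect (acyclic ends F) (acyclicb F).
Proof.
apply: (iffP forallP) => h e; [move=> eF; exact: (implyP (h e) eF) | apply/implyP; exact: h].
Qed.

Lemma extend_tree X F0 B : acyclic ends F0 -> F0 \subset B -> connected_on ends X B ->
  exists T : {set I}, [/\ F0 \subset T, T \subset B, acyclic ends T & connected_on ends X T].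
Proof.
move=> ac0 sub cB.
pose P (T : {set I}) := [&& acyclicb T, F0 \subset T & T \subset B].
have P0 : P F0 by rewrite /P sub subxx !andbT; apply/acyclicP.
case: (maxset_exists P0) => T /maxsetP [PT maxT] F0T.
case/and3P: PT => /acyclicP acT _ TB.
have key g : g \in B -> connect (adj ends T) (ends g).1 (ends g).2.
  move=> gB; case: (boolP (g \in T)) => gT; first exact: connect1 (adj_edge gT).
  apply/negPn/negP => nc.
  have PgT : P (g |: T).
    rewrite /P; apply/and3P; split.
    - by apply/acyclicP; apply: acyclic_add.
    - by apply: subset_trans F0T (subsetUr _ _).
    - by rewrite subUset sub1set gB TB.
  have := maxT _ PgT (subsetUr _ _).
  by move=> E; move: gT; rewrite -E setU11.
exists T; split => //.
move=> x y xX yX; apply: (connect_sub _ (cB x y xX yX)) => u v /adj_inv [g gB [h|h]].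
  by have := key g gB; rewrite h.
by have := key g gB; rewrite h /= csym.
Qed.

Lemma connect_hom (W' : finType) (ends' : I -> W' * W') (f : W -> W') F F' :
  (forall g, g \in F -> f (ends g).1 = f (ends g).2 \/
     (g \in F' /\ ends' g = (f (ends g).1, f (ends g).2))) ->
  forall x y, connect (adj ends F) x y -> connect (adj ends' F') (f x) (f y).
Proof.
move=> hyp x; apply: (@conn_ind _ _ (fun y => connect (adj ends' F') (f x) (f y)) x) => // y z c /adj_inv [g gF h].
case: (hyp g gF) => [eq|[gF' e']].
  by case: h eq => -> /= E; rewrite ?E // -E.
apply: connect_trans c (connect1 _).
by apply/existsP; exists g; rewrite gF' e'; case: h => -> /=; rewrite eqxx ?orbT.
Qed.

End G.
Section Main.
Variables (V : finType) (m : nat) (ends : 'I_m -> V * V) (S : {set 'I_m}).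

Lemma compo_eq x y : compo ends S x = compo ends S y <-> connect (adj ends (~:S)) x y.
Proof.
split=> [E|c].
  have : y \in compo ends S y by rewrite inE connect0.
  by rewrite -E inE.
apply/setP=> z; rewrite !inE; apply/idP/idP => h.
  by apply: connect_trans h; rewrite csym.
exact: connect_trans c h.
Qed.

Lemma compo_edge g : g \notin S -> compo ends S (ends g).1 = compo ends S (ends g).2.
Proof. by move=> gS; apply/compo_eq; apply: connect1; apply: adj_edge; rewrite inE. Qed.

End Main.

Theorem lemma2 (V : finType) (m : nat) (ends : 'I_m -> V * V) (t : nat) :
  simple_graph ends ->
  t <= m./2 ->
  let A := shiftA m t in
  let l := fun e => #|dep A e| in
  let u := fun e => #|dep A e| in
  let S := Sset m t in
  ((exists S' : {set 'I_m}, S' \subset S /\ H_spanning_tree ends S S' /\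
       acyclic ends (depS A S')) ->
     exists T : {set 'I_m}, is_spanning_tree ends setT T /\ lu_satisfies A l u T)
  /\
  (forall T : {set 'I_m}, is_spanning_tree ends setT T -> lu_satisfies A l u T ->
     exists S' : {set 'I_m}, S' \subset S /\ S' \subset T /\
       H_spanning_tree ends S S' /\ acyclic ends (depS A S')).
Proof.
move=> _ _ A l u S; split.
- case=> S' [sS' [[Hconn Hac] dac]].
  set S2 := S' :&: Hedges ends S.
  set D := depS A S2.
  have DnS : D \subset ~: S.
    apply/bigcupsP => e _; apply/subsetP => z; rewrite !inE /A /shiftA => /andP[zt _].
    by rewrite leqNgt zt.
  have dacD : acyclic ends D.
    apply: acyclic_sub dac; apply/bigcupsP => e eS2; apply: (bigcup_sup e).
    by case/setIP: eS2.
  have acK : forall n (K : {set 'I_m}), #|K| = n -> K \subset S2 -> acyclic ends (D :|: K).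
    elim=> [|n IH] K cK KS.
      by rewrite (cards0_eq cK) setU0.
    have [s sK] : exists s, s \in K by apply/card_gt0P; rewrite cK.
    rewrite -(setD1K sK) setUCA; apply: acyclic_add.
      apply: IH; first by move: cK; rewrite (cardsD1 s) sK add1n => -[].
      by apply: subset_trans (subsetDl _ _) KS.
    apply/negP => c.
    have sS2 : s \in S2 by apply: (subsetP KS).
    move/negP: (Hac s sS2); apply.
    apply: (connect_hom (f := compo ends S) _ c) => g.
    rewrite in_setU => /orP[gD|].
      by left; apply: compo_edge; have := subsetP DnS g gD; rewrite inE.
    case/setD1P => gs gK.
    by right; split; last by []; rewrite in_setD1 gs; exact: subsetP KS g gK.
  have acF : acyclic ends (D :|: S2) := acK _ S2 erefl (subxx _).
  set B := (D :|: S2) :|: ~: S.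
  have mS : ~: S \subset B by apply: subsetUr.
  have cB : connected_on ends setT B.
    move=> x y _ _.
    have lift : forall Y, connect (adj (Hends ends S) S2) (compo ends S x) Y ->
        forall z, compo ends S z = Y -> connect (adj ends B) x z.
      apply: (@conn_ind _ _ (fun Y => forall z, compo ends S z = Y -> connect (adj ends B) x z) (compo ends S x)).
        move=> z /esym /compo_eq c; exact: connect_mono mS _ _ c.
      move=> Y Z PY /adj_inv [g gS2 h] z cz.
      have gB : g \in B by rewrite !in_setU gS2 orbT.
      case: h; rewrite /Hends => -[e1 e2].
        apply: connect_trans (PY _ e1) _.
        apply: (@connect_trans _ _ (ends g).2); first by apply: connect1; apply: adj_edge.
        apply: connect_mono mS _ _ _; apply/compo_eq; by rewrite e2 cz.
      apply: connect_trans (PY _ e2) _.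
      apply: (@connect_trans _ _ (ends g).1).
        by rewrite csym; apply: connect1; apply: adj_edge.
      apply: connect_mono mS _ _ _; apply/compo_eq; by rewrite e1 cz.
    apply: (lift (compo ends S y)) => //; apply: Hconn; apply/imsetP; [exists x | exists y] => //.
  have [T [FT TB acT cT]] := extend_tree acF (subsetUl _ _) cB.
  exists T; split; first by split.
  move=> e eT; rewrite /l /u; apply/andP; split; last by apply: subset_leq_card; apply: subsetIl.
  case: (boolP (e \in S2)) => eS2.
    have : dep A e \subset T.
      apply: (subset_trans _ FT); apply: (subset_trans _ (subsetUl _ _)); exact: (bigcup_sup _ eS2).
    by move/setIidPl ->.
  have -> : dep A e = set0.
    apply/setP=> z; rewrite !inE /A /shiftA; apply/negP => /andP[zt /eqP ez].
    have eS : e \in S by rewrite inE ez leq_addl ltn_add2r zt.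
    have := subsetP TB e eT; rewrite !in_setU (negPf eS2) orbF in_setC eS orbF => eD.
    by have := subsetP DnS e eD; rewrite in_setC eS.
  by rewrite cards0.
- move=> T [Tconn Tac] lus.
  have depT e : e \in T -> dep A e \subset T.
    move=> eT; have /andP[h _] := lus e eT.
    have le := subset_leqif_cards (subsetIl (dep A e) T).
    move: h; rewrite /l (geq_leqif le) => /eqP E; rewrite -E; exact: subsetIr.
  set HB := T :&: Hedges ends S.
  have cH : connected_on (Hends ends S) (comps ends S) HB.
    move=> X Y /imsetP[x _ ->] /imsetP[y _ ->].
    apply: (connect_hom (f := compo ends S) _ (Tconn x y (in_setT _) (in_setT _))) => g gT.
    case: (boolP (g \in Hedges ends S)) => gH.
      by right; split; [rewrite in_setI gT gH|].
    left; move: gH; rewrite inE negb_and negbK => /orP[gS|/eqP E]; last exact: E.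
    exact: compo_edge.
  have ac0 : acyclic (Hends ends S) set0 by move=> e; rewrite inE.
  have [S' [_ S'B acS' cS']] := extend_tree ac0 (sub0set _) cH.
  exists S'.
  have S'H : S' \subset Hedges ends S by apply: subset_trans S'B (subsetIr _ _).
  split; first by apply: subset_trans S'H _; apply/subsetP => z; rewrite inE => /andP[].
  split; first by apply: subset_trans S'B (subsetIl _ _).
  split; first by rewrite /H_spanning_tree (setIidPl S'H).
  apply: acyclic_sub Tac; apply/bigcupsP => e eS'; apply: depT.
  exact: (subsetP (subset_trans S'B (subsetIl _ _))).
Qed.
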